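(* Let $A<\mathbb{R}$ be any subring and let $p\in\mathbb{P}^1\setminus\{\infty\}$. Then $\mathrm{PSL}_2(A)\cdot p\subseteq\{\infty\}\cup H(A)\cdot p$. Consequently, the orbit equivalence relations induced by the actions of $\mathrm{PSL}_2(A)$ and of $H(A)$ on $\mathbb{P}^1$ coincide when restricted to $\mathbb{P}^1\setminus\{\infty\}$.
   Context: Let $\mathbb{P}^1=\mathbb{P}^1(\mathbb{R})$ with its usual topology (a circle) and the natural action of $\mathrm{PSL}_2(\mathbb{R})$. Let $G$ be the group of homeomorphisms of $\mathbb{P}^1$ which are piecewise in $\mathrm{PSL}_2(\mathbb{R})$ with finitely many pieces, each an interval. Let $\infty\in\mathbb{P}^1$ correspond to the first basis vector of $\mathbb{R}^2$ and $H<G$ its stabilizer. For a subring $A<\mathbb{R}$, $P_A$ is the set of fixed points of hyperbolic elements (trace of absolute value $>2$) of $\mathrm{PSL}_2(A)$, $G(A)$ is the subgroup of $G$ of elements piecewise in $\mathrm{PSL}_2(A)$ with all interval endpoints in $P_A$, and $H(A)=G(A)\cap H$. *)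

(* Defs.v *)
From HB Require Import structures.
From mathcomp Require Import all_boot all_order all_algebra.
From mathcomp Require Import reals.
Set Implicit Arguments. Unset Strict Implicit. Unset Printing Implicit Defensive.
Import Order.TTheory GRing.Theory Num.Theory.
Local Open Scope ring_scope.

(* P^1(R) = R ∪ {∞}: [Some x] is the line [x:1], [None] is ∞ = [1:0]
   (the line of the first basis vector). *)
Definition P1 (R : realType) := option R.

Section Defs.
Variable R : realType.

Definition ent11 (M : 'M[R]_2) := M ord0 ord0.
Definition ent12 (M : 'M[R]_2) := M ord0 ord_max.
Definition ent21 (M : 'M[R]_2) := M ord_max ord0.
Definition ent22 (M : 'M[R]_2) := M ord_max ord_max.

(* Action of a 2x2 matrix on P^1 (projectivised linear action on column
   vectors): [x:y] |-> [a x + b y : c x + d y]. *)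
Definition mob (M : 'M[R]_2) (x : P1 R) : P1 R :=
  match x with
  | Some r => let den := ent21 M * r + ent22 M in
              if den == 0 then None else Some ((ent11 M * r + ent12 M) / den)
  | None => if ent21 M == 0 then None else Some (ent11 M / ent21 M)
  end.

(* SL_2(A): matrices with entries in A and determinant 1.  PSL_2(A) acts on
   P^1 through SL_2(A) (the action of M and -M coincide). *)
Definition inSL2 (A : {pred R}) (M : 'M[R]_2) : Prop :=
  (forall i j, M i j \in A) /\ \det M = 1.

Definition inPA (A : {pred R}) (x : P1 R) : Prop :=
  exists M, inSL2 A M /\ 2 < `|\tr M| /\ mob M x = x.

(* The cyclic order of the circle P^1, cut at ∞ (∞ is the largest point). *)
Definition P1lt (x y : P1 R) : bool :=
  match x, y with
  | Some r, Some s => r < s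
  | Some _, None => true
  | None, _ => false
  end.
Definition P1le (x y : P1 R) : bool := (x == y) || P1lt x y.

(* x lies in the closed arc of the circle going in the positive direction
   from a to b; for a = b this is the whole circle. *)
Definition in_arc (a b x : P1 R) : bool :=
  if a == b then true
  else if P1lt a b then P1le a x && P1le x b
  else P1le a x || P1le x b.

(* The breakpoints are
   listed in increasing (cyclic) order s_0 < ... < s_{k-1}; the pieces are the
   closed arcs [s_i, s_{i+1}] (indices mod k). *)
Definition piecewise_A (A : {pred R}) (f : P1 R -> P1 R) : Prop :=
  exists s : seq (P1 R),
    sorted P1lt s /\ (forall t, t \in s -> inPA A t) /\
    (if s is [::] then exists M, inSL2 A M /\ forall x, f x = mob M x
     else forall i, (i < size s)%N ->
       exists M, inSL2 A M /\
         forall x, in_arc (nth None s i) (nth None s ((i.+1) %% size s)) x ->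
                   f x = mob M x).

(* Since the pieces are finitely many closed arcs on each of which f agrees
   with a (continuous) projective map, f is automatically continuous, and a
   continuous bijection of the circle is a homeomorphism. *)
Definition in_GA (A : {pred R}) (f : P1 R -> P1 R) : Prop :=
  bijective f /\ piecewise_A A f.

Definition in_HA (A : {pred R}) (f : P1 R -> P1 R) : Prop :=
  in_GA A f /\ f None = None.

End Defs.

(* Main.v *)
Require Import Defs.
From HB Require Import structures.
From mathcomp Require Import all_boot all_order all_algebra.
From mathcomp Require Import reals ring lra.
Import Order.TTheory GRing.Theory Num.Theory.
Set Implicit Arguments. Unset Strict Implicit. Unset Printing Implicit Defensive.
Local Open Scope ring_scope.

Section P1order.
Variable R : realType.
Implicit Types x y z : P1 R.

Lemma eqSome (a b : R) : (Some a == Some b) = (a == b).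
Proof. by []. Qed.

Lemma P1leSS (a b : R) : P1le (Some a) (Some b) = (a <= b).
Proof. by rewrite /P1le /= le_eqVlt. Qed.

Lemma P1lt_trans x y z : P1lt x y -> P1lt y z -> P1lt x z.
Proof. by case: x; case: y; case: z => //= ? ? ?; apply: lt_trans. Qed.

Lemma P1lt_irr x : P1lt x x = false.
Proof. by case: x => //= ?; rewrite ltxx. Qed.

Lemma P1lt_asym x y : P1lt x y -> ~~ P1lt y x.
Proof. by case: x; case: y => //= a b h; rewrite -leNgt ltW. Qed.

Lemma P1_total x y : ~~ P1le x y -> P1lt y x.
Proof.
case: x => [a|]; case: y => [b|] //=; rewrite /P1le /= negb_or => /andP [hne].
rewrite -leNgt le_eqVlt => /orP [/eqP e|//].
by rewrite e eqxx in hne.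
Qed.

Lemma P1le_lt_trans x y z : P1le x y -> P1lt y z -> P1lt x z.
Proof. by case/orP => [/eqP ->//|]; apply: P1lt_trans. Qed.

Lemma P1lt_le x y : P1lt x y -> P1le x y.
Proof. by move=> h; rewrite /P1le h orbT. Qed.

Lemma P1le_refl x : P1le x x.
Proof. by rewrite /P1le eqxx. Qed.

Lemma P1le_last a t : path (@P1lt R) a t -> P1le a (last a t).
Proof.
elim: t a => [|b t IH] a /=; first by move=> _; exact: P1le_refl.
case/andP=> hab hp; apply: P1lt_le; have := IH b hp.
by move=> h; case/orP: h => [/eqP <-//|h]; exact: P1lt_trans hab h.
Qed.

Lemma cover_path a t x : path (@P1lt R) a t -> t != [::] -> P1le a x ->
  P1le x (last a t) ->
  exists2 i, (i < size t)%N & P1le (nth None (a :: t) i) x && P1le x (nth None t i).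
Proof.
elim: t a => [//|b t IH] a /= /andP [hab hp] _ hax hxl.
case hxb: (P1le x b); first by exists 0%N => //=; rewrite hax.
have hbx : P1lt b x by apply: P1_total; rewrite hxb.
case: t IH hp hxl => [|c t] IH hp hxl /=; first by rewrite hxl in hxb.
have [i hi hh] := IH b hp isT (P1lt_le hbx) hxl.
by exists i.+1.
Qed.

Lemma cover (s : seq (P1 R)) x : sorted (@P1lt R) s -> s != [::] ->
  exists2 i, (i < size s)%N &
    in_arc (nth None s i) (nth None s ((i.+1) %% size s)) x.
Proof.
case: s => [//|a t] /= hp _.
case: t hp => [|b t] hp; first by exists 0%N => //; rewrite /in_arc eqxx.
set t' := b :: t.
case hin: (P1le a x && P1le x (last a t')).
  case/andP: hin => hax hxl.
  have [i hi /andP [h1 h2]] := cover_path hp isT hax hxl.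
  exists i; first by rewrite /= ltnS ltnW.
  rewrite modn_small; last by rewrite ltnS.
  rewrite /in_arc; case: ifP => // _.
  have := (pathP None hp) i hi => /= ->.
  by rewrite h1 h2.
exists (size t'); first by [].
rewrite modnn.
have -> : nth None (a :: t') (size t') = last a t' by exact: (nth_last None (a :: t')).
rewrite /in_arc /=; case: ifP => // hne.
have hal := P1le_last hp.
have hlt : P1lt a (last a t').
  case/orP: hal => // /eqP h; by rewrite h eqxx in hne.
rewrite (negbTE (P1lt_asym hlt)).
move/negbT: hin; rewrite negb_and => /orP [h|h].
  by rewrite (P1lt_le (P1_total h)) orbT.
by rewrite (P1lt_le (P1_total h)).
Qed.

End P1order.
Lemma det22 (R : comNzRingType) (A : 'M[R]_2) :
  \det A = A ord0 ord0 * A ord_max ord_max - A ord0 ord_max * A ord_max ord0.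
Proof.
rewrite (expand_det_row _ ord0) !big_ord_recr big_ord0 /= add0r.
rewrite /cofactor !det_mx11 !mxE /=.
have -> : (lift ord0 ord0 : 'I_2) = ord_max by apply/val_inj.
have -> : (widen_ord (leqnSn 1) ord_max : 'I_2) = ord0 by apply/val_inj.
have -> : (lift ord_max ord0 : 'I_2) = ord0 by apply/val_inj.
have -> : (lift ord0 ord0 : 'I_2) = ord_max by apply/val_inj.
by rewrite /= expr0 expr1 mul1r mulN1r mulrN.
Qed.
Lemma tr22 (R : comNzRingType) (A : 'M[R]_2) :
  \tr A = A ord0 ord0 + A ord_max ord_max.
Proof. rewrite /mxtrace big_ord_recr big_ord1 /=. have -> : widen_ord (leqnSn 1) ord0 = ord0 :> 'I_2 by apply/val_inj.
by []. Qed.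

Section Mats.
Variable R : realType.

Section Closed.
Variables (A : {pred R}) (hA : subring_closed A).
Lemma mem1 : 1 \in A. Proof. by case: hA. Qed.
Lemma memB x y : x \in A -> y \in A -> x - y \in A.
Proof. by case: hA => _ h _; apply: h. Qed.
Lemma memM x y : x \in A -> y \in A -> x * y \in A.
Proof. by case: hA => _ _ h; apply: h. Qed.
Lemma mem0 : 0 \in A. Proof. by rewrite -(subrr 1) memB // mem1. Qed.
Lemma memN x : x \in A -> - x \in A.
Proof. by move=> h; rewrite -sub0r memB // mem0. Qed.
Lemma memD x y : x \in A -> y \in A -> x + y \in A.
Proof. by move=> hx hy; rewrite -(opprK y) memB // memN. Qed.
Lemma memn (m : nat) : (m%:R : R) \in A.
Proof. by elim: m => [|m IH]; rewrite ?mem0 // mulrS memD // mem1. Qed.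
End Closed.

Definition mk2 (a b c d : R) : 'M[R]_2 :=
  \matrix_(i < 2, j < 2)
    if i == ord0 then (if j == ord0 then a else b) else (if j == ord0 then c else d).

Lemma mk2E a b c d :
  [/\ ent11 (mk2 a b c d) = a, ent12 (mk2 a b c d) = b,
      ent21 (mk2 a b c d) = c & ent22 (mk2 a b c d) = d].
Proof. by rewrite /ent11 /ent12 /ent21 /ent22 !mxE. Qed.

Lemma mobS (M : 'M[R]_2) y : ent21 M * y + ent22 M != 0 ->
  mob M (Some y) = Some ((ent11 M * y + ent12 M) / (ent21 M * y + ent22 M)).
Proof. by move=> h; rewrite /= (negbTE h). Qed.

Lemma detE (M : 'M[R]_2) : \det M = ent11 M * ent22 M - ent12 M * ent21 M.
Proof. by rewrite det22. Qed.

Lemma trE (M : 'M[R]_2) : \tr M = ent11 M + ent22 M.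
Proof. by rewrite tr22. Qed.

Lemma inSL2_mk2 (A : {pred R}) (hA : subring_closed A) a b c d :
  a \in A -> b \in A -> c \in A -> d \in A -> a * d - b * c = 1 ->
  inSL2 A (mk2 a b c d).
Proof.
move=> ha hb hc hd hdet; split; last by rewrite detE; case: (mk2E a b c d) => -> -> -> ->.
by move=> i j; rewrite mxE; case: ifP; case: ifP.
Qed.

Lemma mob_opp (M : 'M[R]_2) x : mob (- M) x = mob M x.
Proof.
rewrite /mob /ent11 /ent12 /ent21 /ent22 !mxE.
case: x => [y|].
  rewrite !mulNr -opprD oppr_eq0; case: ifP => // _.
  by rewrite -opprD invrN mulrNN.
by rewrite oppr_eq0; case: ifP => // _; rewrite invrN mulrNN.
Qed.

Lemma inSL2_opp (A : {pred R}) (hA : subring_closed A) M :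
  inSL2 A M -> inSL2 A (- M).
Proof.
case=> hM hd; split; first by move=> i j; rewrite mxE memN.
by rewrite detE /ent11 /ent12 /ent21 /ent22 !mxE mulrNN mulrNN -detE.
Qed.



Lemma core (A : {pred R}) (hA : subring_closed A) (M : 'M[R]_2) (p : R) :
  inSL2 A M -> 0 < ent21 M -> ent21 M * p + ent22 M != 0 ->
  exists f : P1 R -> P1 R, in_HA A f /\ f (Some p) = mob M (Some p).
Proof.
move=> hM hc hu.
have hMA : forall i j, M i j \in A by case: hM.
set a := ent11 M; set b := ent12 M; set c := ent21 M; set d := ent22 M.
have haA : a \in A by apply: hMA.
have hbA : b \in A by apply: hMA.
have hcA : c \in A by apply: hMA.
have hdA : d \in A by apply: hMA.
have hdet : a * d - b * c = 1 by case: hM => _ h; rewrite -h detE.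
have hc0 : c != 0 by rewrite gt_eqF.
have hb : b = (a * d - 1) / c by rewrite -hdet; field.
set u := c * p + d.
set K := u ^+ 2 + 1 - (a + d) * u.
have hu0 : 0 < `|u| by rewrite normr_gt0.
have hcu : 0 < c * `|u| by rewrite mulr_gt0.
pose m := Num.Def.archi_bound (`|K| / (c * `|u|)).
have hm : `|K| / (c * `|u|) < m%:R by apply: archi_boundP; rewrite divr_ge0 // ltW.
have hmK : `|K| < m%:R * (c * `|u|) by rewrite -ltr_pdivrMr.
have hKK := ler_norm K.
pose n : R := if 0 < u then - m%:R else m%:R.
have hnA : n \in A by rewrite /n; case: ifP => _; rewrite ?memN ?memn.
have hnK : n * c * u < - K.
  rewrite /n; case: ifP => hpos.
    rewrite (gtr0_norm hpos) in hmK.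
    have -> : - m%:R * c * u = - (m%:R * (c * u)) by ring.
    lra.
  have hneg : u < 0 by rewrite lt_neqAle hu /= leNgt hpos.
  rewrite (ltr0_norm hneg) in hmK.
  have -> : m%:R * c * u = - (m%:R * (c * - u)) by ring.
  lra.
set t := a + d - n * c.
have hQu : u ^+ 2 - t * u + 1 < 0 by rewrite /t /K in hnK *; lra.
have ht2 : 4 < t ^+ 2.
  have h1 : 0 < u ^+ 2 by rewrite lt_def sqrf_eq0 hu sqr_ge0.
  have h2 : u ^+ 2 + 1 < t * u by lra.
  have h3 : (u ^+ 2 + 1) ^+ 2 < (t * u) ^+ 2.
    by rewrite ltr_pXn2r //; rewrite qualifE /=; lra.
  have h4 : 4 * u ^+ 2 <= (u ^+ 2 + 1) ^+ 2.
    have : 0 <= (u ^+ 2 - 1) ^+ 2 by rewrite sqr_ge0.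
    lra.
  rewrite exprMn in h3.
  nra.
set r := Num.sqrt (t ^+ 2 - 4).
have hr : 0 < r by rewrite sqrtr_gt0; lra.
have hr2 : r ^+ 2 = t ^+ 2 - 4 by rewrite sqr_sqrtr //; lra.
set l1 := (t - r) / 2; set l2 := (t + r) / 2.
have hsum : l1 + l2 = t by rewrite /l1 /l2; field.
have hprod : l1 * l2 = 1.
  have -> : l1 * l2 = (t ^+ 2 - r ^+ 2) / 4 by rewrite /l1 /l2; field.
  by rewrite hr2; field.
have hQf : forall w, w ^+ 2 - t * w + 1 = (w - l1) * (w - l2).
  by move=> w; rewrite -hsum -hprod; ring.
have hl12 : l1 < l2 by rewrite /l1 /l2; lra.
have hl1 : l1 != 0 by apply/eqP => h; move: hprod; rewrite h mul0r => /eqP; rewrite eq_sym oner_eq0.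
have hl2 : l2 != 0 by apply/eqP => h; move: hprod; rewrite h mulr0 => /eqP; rewrite eq_sym oner_eq0.
have hQl1 : l1 ^+ 2 - t * l1 + 1 = 0 by rewrite hQf subrr mul0r.
have hQl2 : l2 ^+ 2 - t * l2 + 1 = 0 by rewrite hQf subrr mulr0.
set y1 := (l1 - d) / c; set y2 := (l2 - d) / c.
have hy1 : c * y1 + d = l1 by rewrite /y1; field.
have hy2 : c * y2 + d = l2 by rewrite /y2; field.
have hy12 : y1 < y2.
  have : c * y1 < c * y2 by lra.
  by rewrite ltr_pM2l.
pose I (y : R) : bool := (c * y + d) ^+ 2 - t * (c * y + d) + 1 <= 0.
have hIint : forall y, I y = (y1 <= y <= y2).
  move=> y; rewrite /I hQf.
  have -> : c * y + d - l1 = c * (y - y1) by rewrite -hy1; ring.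
  have -> : c * y + d - l2 = c * (y - y2) by rewrite -hy2; ring.
  have -> : c * (y - y1) * (c * (y - y2)) = c ^+ 2 * ((y - y1) * (y - y2)) by ring.
  have hc2 : 0 < c ^+ 2 by rewrite exprn_gt0.
  rewrite pmulr_rle0 //.
  apply/idP/idP.
    move=> h; apply/andP; split; rewrite leNgt; apply/negP => h'; nra.
  case/andP => h1 h2; nra.
have hIw : forall y, I y -> c * y + d != 0.
  move=> y; rewrite /I; apply: contraTneq => ->.
  by rewrite expr0n /= mulr0 subr0 add0r -ltNge ltr01.
have hgen : forall y, a * y + b - (y + n) * (c * y + d)
    = - ((c * y + d) ^+ 2 - t * (c * y + d) + 1) / c.
  by move=> y; rewrite hb /t; field.
have hfixeq : forall y, (c * y + d) ^+ 2 - t * (c * y + d) + 1 = 0 ->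
    (a * y + b) / (c * y + d) = y + n.
  move=> y hQ; have hw : c * y + d != 0.
    apply: contra_eq_neq hQ => ->; by rewrite expr0n /= mulr0 subr0 add0r oner_eq0.
  have := hgen y; rewrite hQ oppr0 mul0r => /eqP; rewrite subr_eq0 => /eqP ->.
  by rewrite mulfK.
have hfix1 : mob M (Some y1) = Some (y1 + n).
  by rewrite mobS -/c -/d hy1 // -hy1 hfixeq // hy1.
have hfix2 : mob M (Some y2) = Some (y2 + n).
  by rewrite mobS -/c -/d hy2 // -hy2 hfixeq // hy2.
have hMS : forall y, I y -> mob M (Some y) = Some ((a * y + b) / (c * y + d)).
  by move=> y hy; rewrite mobS // hIw.
have hQneg : forall w, (w ^+ 2 - t * w + 1) / w ^+ 2 <= 0 -> w != 0 ->
    w ^+ 2 - t * w + 1 <= 0.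
  move=> w h hw; have hw2 : 0 < w ^+ 2 by rewrite lt_def sqrf_eq0 hw sqr_ge0.
  by rewrite ler_pdivrMr // mul0r in h.
have hQpos : forall w (q : R), q <= 0 -> w != 0 -> q / w ^+ 2 <= 0.
  move=> w q hq hw; rewrite mulr_le0_ge0 // invr_ge0 sqr_ge0 //.
pose f (x : P1 R) : P1 R :=
  if x is Some y then (if I y then mob M (Some y) else Some (y + n)) else None.
pose h (x : P1 R) : P1 R :=
  if x is Some z then
    (if I (z - n) then Some ((d * z - b) / (a - c * z)) else Some (z - n))
  else None.
have hfh : cancel f h.
  case=> [y|//]; rewrite /f.
  case hI: (I y); last by rewrite /h addrK hI.
  rewrite hMS // /h; have hw := hIw y hI.
  set z := (a * y + b) / (c * y + d).
  have e1 : c * (z - n) + d = t - 1 / (c * y + d).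
  by rewrite /z hb /t; field; rewrite hw hc0.
  have e3 : a - c * z = 1 / (c * y + d).
    by rewrite /z hb; field; rewrite hw hc0.
  have -> : I (z - n).
    rewrite /I e1.
    have -> : (t - 1 / (c * y + d)) ^+ 2 - t * (t - 1 / (c * y + d)) + 1
      = ((c * y + d) ^+ 2 - t * (c * y + d) + 1) / (c * y + d) ^+ 2.
      by field; rewrite hw.
    exact: hQpos.
  rewrite e3; congr Some; rewrite /z hb; field.
  by rewrite hw hc0.
have hhf : cancel h f.
  case=> [z|//]; rewrite /h.
  case hI: (I (z - n)); last by rewrite /f subrK hI.
  have hnz : a - c * z != 0.
    apply/eqP => e; move: hI; rewrite /I.
    have -> : c * (z - n) + d = t by rewrite /t; lra.
    by rewrite expr2 subrr add0r ler10.
  set y := (d * z - b) / (a - c * z).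
  have e4 : c * y + d = 1 / (a - c * z).
    by rewrite /y hb; field; rewrite hnz hc0.
  have hIy : I y.
    rewrite /I e4.
    have -> : (1 / (a - c * z)) ^+ 2 - t * (1 / (a - c * z)) + 1
      = ((c * (z - n) + d) ^+ 2 - t * (c * (z - n) + d) + 1) / (a - c * z) ^+ 2.
      by rewrite /t; field; rewrite hnz.
    exact: hQpos.
  rewrite /f hIy hMS // e4; congr Some; rewrite /y hb; field.
  by rewrite hnz hc0.
have hy12n : (y1 == y2) = false by rewrite lt_eqF.
have hy21n : (y2 == y1) = false by rewrite gt_eqF.
have hinPA : forall y, (c * y + d) ^+ 2 - t * (c * y + d) + 1 = 0 -> inPA A (Some y).
  move=> y hQ; exists (mk2 (a - n * c) (b - n * d) c d).
  have hw : c * y + d != 0.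
    apply: contra_eq_neq hQ => ->; by rewrite expr0n /= mulr0 subr0 add0r oner_eq0.
  case: (mk2E (a - n * c) (b - n * d) c d) => e11 e12 e21 e22.
  split; first apply: inSL2_mk2 => //.
  - by apply: memB => //; apply: memM.
  - by apply: memB => //; apply: memM.
  - by rewrite -hdet; ring.
  split.
    rewrite trE e11 e22.
    have -> : a - n * c + d = t by rewrite /t; ring.
    case: (ltrP t 0) => ht.
      rewrite ltr0_norm //; nra.
    rewrite ger0_norm //; nra.
  rewrite mobS e21 e22 // e11 e12; congr Some.
  have -> : (a - n * c) * y + (b - n * d) = (a * y + b) - n * (c * y + d) by ring.
  by rewrite mulrBl hfixeq // mulfK // addrK.
have hTn : forall x, mob (mk2 1 n 0 1) x = if x is Some y then Some (y + n) else None.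
  case: (mk2E 1 n 0 1) => e11 e12 e21 e22.
  case=> [y|]; rewrite /mob ?e11 ?e12 ?e21 ?e22 ?eqxx //.
  by rewrite mul0r add0r oner_eq0 mul1r divr1.
exists f; split; last first.
  rewrite /f.
  have -> : I p by rewrite /I -/u ltW.
  by [].
split; last by [].
split; first by exists h.
exists [:: Some y1; Some y2]; split; first by rewrite /= hy12.
split.
  move=> x; rewrite !inE => /orP [/eqP ->|/eqP ->]; apply: hinPA.
    by rewrite hy1.
  by rewrite hy2.
move=> i; case: i => [|[|i]] // _ /=.
  exists M; split => // x.
  rewrite /in_arc eqSome hy12n /= hy12.
  case: x => [y|] //; rewrite !P1leSS => hy.
  by rewrite /f hIint hy.
exists (mk2 1 n 0 1); split.
  apply: inSL2_mk2 => //; rewrite ?mem1 ?mem0 //.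
  by rewrite mulr0 subr0 mulr1.
move=> x; rewrite hTn /in_arc eqSome hy21n /= ltNge (ltW hy12) /=.
case: x => [y|] //; rewrite !P1leSS => hy.
rewrite /f; case hI: (I y) => //.
move: hI; rewrite hIint => /andP [h1 h2].
case/orP: hy => hy.
  have -> : y = y2 by apply/le_anti; rewrite h2 hy.
  exact: hfix2.
have -> : y = y1 by apply/le_anti; rewrite h1 hy.
exact: hfix1.
Qed.
End Mats.

Theorem proposition6 (R : realType) (A : {pred R}) (hA : subring_closed A) :
  (forall p : R, forall M : 'M[R]_2, inSL2 A M ->
     mob M (Some p) = None \/
     exists f : P1 R -> P1 R, in_HA A f /\ f (Some p) = mob M (Some p))
  /\
  (forall x y : R,
     (exists M : 'M[R]_2, inSL2 A M /\ mob M (Some x) = Some y) <->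
     (exists f : P1 R -> P1 R, in_HA A f /\ f (Some x) = Some y)).
Proof.
have part1 : forall p : R, forall M : 'M[R]_2, inSL2 A M ->
     mob M (Some p) = None \/
     exists f : P1 R -> P1 R, in_HA A f /\ f (Some p) = mob M (Some p).
  move=> p M hM.
  case hden: (ent21 M * p + ent22 M == 0); first by left; rewrite /= hden.
  right; have hu := negbT hden.
  case: (ltrgtP (ent21 M) 0) => hc.
  - have hc' : 0 < ent21 (- M) by rewrite /ent21 mxE oppr_gt0.
    have hu' : ent21 (- M) * p + ent22 (- M) != 0.
      by rewrite /ent21 /ent22 !mxE mulNr -opprD oppr_eq0.
    have [f [hf ef]] := core hA (inSL2_opp hA hM) hc' hu'.
    by exists f; rewrite ef mob_opp.
  - exact: core.
  - exists (mob M); split; last by [].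
    have hdet : ent11 M * ent22 M = 1.
      by case: hM => _; rewrite detE hc mulr0 subr0.
    have hd : ent22 M != 0.
      by apply/eqP => e; move: hdet; rewrite e mulr0 => /eqP; rewrite eq_sym oner_eq0.
    have ha : ent11 M != 0.
      by apply/eqP => e; move: hdet; rewrite e mul0r => /eqP; rewrite eq_sym oner_eq0.
    have hmS : forall y, mob M (Some y) = Some ((ent11 M * y + ent12 M) / ent22 M).
      by move=> y; rewrite mobS hc mul0r add0r.
    have hmN : mob M None = None by rewrite /= hc eqxx.
    split; last by [].
    split.
      exists (fun x => if x is Some z then Some ((ent22 M * z - ent12 M) / ent11 M) else None).
        move=> [y|] /=; last by rewrite hc eqxx.
        rewrite hc (mul0r y) (add0r (ent22 M)) (negbTE hd) /=; congr Some; field; rewrite hd ha //.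
      move=> [z|] /=; last by rewrite hc eqxx.
      rewrite hc (mul0r ((ent22 M * z - ent12 M) / ent11 M)) (add0r (ent22 M)) (negbTE hd) /=; congr Some; field; rewrite hd ha //.
    by exists [::]; split => //; split => //; exists M.
split; first exact: part1.
move=> x y; split.
  case=> M [hM e].
  have [h|[f [hf ef]]] := part1 x M hM; first by rewrite e in h.
  by exists f; rewrite ef e.
case=> f [[[_ [s [hs [_ hpw]]]] _] ef].
case: s hs hpw => [|a s'] hs hpw.
  by case: hpw => M [hM hfM]; exists M; rewrite -hfM.
have [i hi hin] := cover (Some x) hs isT.
have [M [hM hfM]] := hpw i hi.
by exists M; rewrite -hfM.
Qed.
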